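(* For every tree $T$ on $n$ vertices, $\operatorname{diam}(\mathcal{C}_3(T))\ge\lfloor 3n/2\rfloor$.
   Context: A proper 3-coloring of a tree $T=(V,E)$ is a map $f\colon V\to\mathbb{Z}/3\mathbb{Z}$ with $f(u)\neq f(v)$ for every edge $uv\in E$. The 3-coloring graph $\mathcal{C}_3(T)$ has the proper 3-colorings as vertices, two colorings adjacent iff they differ at exactly one vertex; $\operatorname{diam}$ denotes graph diameter. *)

(* Defs.v *)
From mathcomp Require Import all_boot all_algebra.
Set Implicit Arguments. Unset Strict Implicit. Unset Printing Implicit Defensive.

Section Coloring.
Variables (V : finType) (e : rel V).

Definition simple_graph : Prop := symmetric e /\ irreflexive e.

Definition has_cycle : Prop :=
  exists s : seq V, [/\ 2 < size s, uniq s & cycle e s].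

Definition connected_graph : Prop := forall x y : V, connect e x y.

Definition is_tree : Prop := [/\ simple_graph, connected_graph & ~ has_cycle].

Definition coloring := {ffun V -> 'Z_3}.

Definition proper (f : coloring) : bool :=
  [forall u, forall v, e u v ==> (f u != f v)].

Definition recol_adj : rel coloring := fun f g =>
  [&& proper f, proper g & #|[set v | f v != g v]| == 1].

Definition walk_of_len (k : nat) (f g : coloring) : bool :=
  [exists p : k.-tuple coloring, path recol_adj f p && (last f p == g)].

(* A shortest walk
   visits distinct vertices, so it has length < #|coloring|; if g is not
   reachable the value #|coloring| is returned (never happens for trees). *)
Definition recol_dist (f g : coloring) : nat :=
  find (fun k => walk_of_len k f g) (iota 0 #|{: coloring}|).

Definition recol_diam : nat :=
  \max_(f : coloring | proper f) \max_(g : coloring | proper g) recol_dist f g.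

End Coloring.

(* Main.v *)
Require Import Defs.
From mathcomp Require Import all_boot all_algebra zify.
From Stdlib Require Import ZArith.
From mathcomp Require Import all_boot.
Set Implicit Arguments. Unset Strict Implicit. Unset Printing Implicit Defensive.

Definition d3 (a b : 'Z_3) : nat := (val a + 3 - val b) %% 3.
Definition sg (a b : 'Z_3) : Z := if d3 a b == 1 then 1%Z else (-1)%Z.
Definition mv (a b : 'Z_3) : Z := if d3 a b == 1 then 1%Z else (-1)%Z.

Lemma local_edge (a b c : 'Z_3) : a != b -> c != a -> c != b ->
  (2 * mv a b = sg b c - sg a c)%Z /\ (2 * (- mv a b) = sg c b - sg c a)%Z.
Proof.
case: a => [[|[|[|?]]] ?] //; case: b => [[|[|[|?]]] ?] //;
case: c => [[|[|[|?]]] ?] //.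
Qed.

Lemma local_cong (a b : 'Z_3) : a != b ->
  exists q, (mv a b = Z.of_nat (val a) - Z.of_nat (val b) + 3 * q)%Z.
Proof.
case: a => [[|[|[|?]]] ?] //; case: b => [[|[|[|?]]] ?] //= _;
 by [exists 0%Z | exists 1%Z | exists (-1)%Z].
Qed.


Lemma dup_split (T : eqType) (s : seq T) : ~~ uniq s ->
  exists s1 x s2 s3, s = s1 ++ x :: s2 ++ x :: s3.
Proof.
elim: s => [|y s IH] //=; rewrite negb_and negbK; case/orP.
  by case/splitPr=> s2 s3; exists [::], y, s2, s3.
by case/IH=> s1 [x [s2 [s3 ->]]]; exists (y :: s1), x, s2, s3.
Qed.

Section P.
Variables (V : finType) (e : rel V).
Hypothesis sym : symmetric e.
Hypothesis irr : irreflexive e.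

Lemma odd_cycle m s : size s = m -> odd m -> cycle e s -> has_cycle e.
Proof.
elim/ltn_ind: m s => m IH s Hs Hodd Hc.
case Hu: (uniq s).
  exists s; split => //; subst m.
  case: s Hodd Hc {Hu IH} => [|x [|y [|z t]]] //=.
  by rewrite irr.
have [s1 [x [s2 [s3 E]]]] := dup_split (negbT Hu).
rewrite E -(rot_cycle (size s1)) rot_size_cat -cat_cons -catA cat_cons in Hc.
move: Hc; rewrite /cycle rcons_cat rcons_cons cat_path /= => /and3P[p1 ex p2].
have c1 : cycle e (x :: s2) by rewrite /cycle rcons_path p1 ex.
have c2 : cycle e (x :: (s3 ++ s1)) by [].
have Hm : m = size (x :: s2) + size (x :: (s3 ++ s1)).
  by rewrite -Hs E /= !size_cat /= size_cat /=; lia.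
move: Hodd; rewrite Hm oddD; case O1: (odd (size (x :: s2))) => /= O2.
  by apply: (IH (size (x :: s2)) _ (x :: s2)) => //; rewrite Hm /=; lia.
by apply: (IH (size (x :: (s3 ++ s1))) _ (x :: (s3 ++ s1))) => //; rewrite Hm /=; lia.
Qed.

Definition e2 : rel (V * bool) := fun a b => e a.1 b.1 && (b.2 == ~~ a.2).

Lemma e2_path (p : seq (V * bool)) a b : path e2 (a, b) p ->
  [/\ path e a (map fst p), (last (a, b) p).2 = b (+) odd (size p)
    & last a (map fst p) = (last (a, b) p).1].
Proof.
elim: p a b => [|[c d] p IH] a b /=; first by rewrite addbF.
case/andP=> /andP[/= eac /eqP Ed] Hp; subst d.
have [h1 h2 h3] := IH _ _ Hp.
by rewrite eac h1 h2 h3; split=> //; case: (b); case: (odd (size p)).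
Qed.

Lemma no_odd : ~ has_cycle e -> forall v, ~~ connect e2 (v, false) (v, true).
Proof.
move=> Hnc v; apply/negP => /connectP [p Hp Hl].
have [h1 h2 h3] := e2_path Hp.
rewrite -Hl /= in h2 h3.
apply: Hnc.
move: h1 h2 h3; rewrite -(size_map fst).
case/lastP: (map fst p) => [|q y] //.
rewrite last_rcons => h1 h2 h3; subst y.
apply: (@odd_cycle (size (v :: q)) (v :: q)) => //.
by move: h2; rewrite size_rcons => <-.
Qed.

Lemma lift_connect x y b : connect e x y -> exists c, connect e2 (x, b) (y, c).
Proof.
case/connectP=> p Hp ->; elim: p x b Hp => [|z p IH] x b /=.
  by move=> _; exists b.
case/andP=> exz Hp; have [c Hc] := IH z (~~ b) Hp; exists c.
apply: connect_trans Hc; apply: connect1; by rewrite /e2 /= exz eqxx.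
Qed.

Lemma e2_sym : symmetric e2.
Proof. by move=> [a b] [c d]; rewrite /e2 /= sym; case: b; case: d. Qed.

Lemma bipart r : ~ has_cycle e -> (forall x y, connect e x y) ->
  forall u w, e u w ->
  (connect e2 (r, false) (u, false)) != (connect e2 (r, false) (w, false)).
Proof.
move=> Hnc Hcon u w euw.
have cs := sym_connect_sym e2_sym.
have st : forall b, connect e2 (u, b) (w, ~~ b).
  by move=> b; apply: connect1; rewrite /e2 /= euw eqxx.
case Hu: (connect e2 (r, false) (u, false)); case Hw: (connect e2 (r, false) (w, false)) => //.
  have H1 : connect e2 (r, false) (w, true) := connect_trans Hu (st false).
  case/negP: (no_odd Hnc w).
  by apply: connect_trans H1; rewrite cs.
have [c Hc] := lift_connect false (Hcon r u).
destruct c.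
  by move: (connect_trans Hc (st true)); rewrite /= Hw.
by rewrite Hc in Hu.
Qed.
End P.


Definition c0 : 'Z_3 := Ordinal (isT : 0 < 3).
Definition c1 : 'Z_3 := Ordinal (isT : 1 < 3).
Definition c2 : 'Z_3 := Ordinal (isT : 2 < 3).
Definition fcol (V : finType) (Q : {set V}) : coloring V :=
  [ffun v => if v \in Q then c0 else c1].
Definition gcol (V : finType) (Q S : {set V}) : coloring V :=
  [ffun v => if v \in S then c1 else if v \in Q then c2 else c0].

Lemma connect_const (V : finType) (e : rel V) (h : V -> Z) :
  (forall u w, e u w -> h u = h w) -> forall x y, connect e x y -> h x = h y.
Proof.
move=> H x y /connectP [p Hp ->]; elim: p x Hp => [|z p IH] x //=.
by case/andP=> exz /IH <-; apply: H.
Qed.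

Lemma sumS (V : finType) (S : {set V}) : \sum_v ((v \in S) : nat) = #|S|.
Proof.
rewrite -sum1_card [RHS]big_mkcond /=; apply: eq_bigr => v _; by case: (v \in S).
Qed.

Lemma sum1 (V : finType) : \sum_(v : V) 1 = #|V|.
Proof. by rewrite sum1_card. Qed.

Lemma vc0 : Z.of_nat (val c0) = 0%Z. Proof. by []. Qed.
Lemma vc1 : Z.of_nat (val c1) = 1%Z. Proof. by []. Qed.
Lemma vc2 : Z.of_nat (val c2) = 2%Z. Proof. by []. Qed.

Lemma sgpm a b : sg a b = 1%Z \/ sg a b = (-1)%Z.
Proof. by rewrite /sg; case: ifP; auto. Qed.

Lemma final_count (V : finType) (e : rel V) (Q S : {set V}) k (L : V -> Z) :
  S \subset Q -> (forall x y, connect e x y) -> 0 < #|V| ->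
  \sum_v Z.abs_nat (L v) <= k ->
  (forall v, exists q, L v = Z.of_nat (val (fcol Q v)) - Z.of_nat (val (gcol Q S v)) + 3*q)%Z ->
  (forall u w, e u w -> 2*(L u - L w) = sg (gcol Q S u) (gcol Q S w) - sg (fcol Q u) (fcol Q w))%Z ->
  #|V| + minn #|S| (#|V| - #|S|) <= k.
Proof.
move=> SQ Hcon /card_gt0P [r _] HL HC HE.
have key : forall v, exists q, (L v = 1 + 3*q + (if v \in S then 1 else 0))%Z.
  move=> v; have [q Hq] := HC v; rewrite !ffunE in Hq.
  case Sv: (v \in S) in Hq *.
    rewrite (subsetP SQ v Sv) in Hq; cbv iota in Hq; rewrite vc0 vc1 in Hq.
    by exists (q - 1)%Z; lia.
  case Qv: (v \in Q) in Hq *; cbv iota in Hq; rewrite ?vc0 ?vc1 ?vc2 in Hq.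
    by exists (q - 1)%Z; lia.
  by exists q; lia.
set M := fun v => (L v - (if v \in S then 1 else 0))%Z.
have Me : forall u w, e u w -> M u = M w.
  move=> u w euw; have := HE u w euw; have [qu Hu] := key u; have [qw Hw] := key w.
  have := sgpm (gcol Q S u) (gcol Q S w); have := sgpm (fcol Q u) (fcol Q w).
  rewrite /M; case: (u \in S) in Hu *; case: (w \in S) in Hw *; lia.
have Mc : forall v, M v = M r by move=> v; apply: (connect_const Me); apply: Hcon.
have [q Hq] := key r.
have Lv : forall v, (L v = 1 + 3*q + (if v \in S then 1 else 0))%Z.
  by move=> v; have := Mc v; rewrite /M Hq; case: (v \in S) => /=; lia.
case: (Z.le_gt_cases 0 q) => hq.
  have : \sum_v (1 + (v \in S : nat)) <= k.
    apply: leq_trans HL; apply: leq_sum => v _; rewrite Lv.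
    by case: (v \in S); cbv beta iota delta [nat_of_bool]; lia.
  rewrite big_split /= sum1 sumS; apply: leq_trans; by rewrite leq_add2l geq_minl.
have : \sum_(v : V) 2 <= k + #|S|.
  apply: (@leq_trans (\sum_v (Z.abs_nat (L v) + (v \in S : nat)))).
    apply: leq_sum => v _; rewrite Lv.
    by case: (v \in S); cbv beta iota delta [nat_of_bool]; lia.
  by rewrite big_split /= sumS leq_add2r.
rewrite sum_nat_const.
have : #|S| <= #|V| by apply: max_card.
move=> h1; set c := #|xpredT|; have : c = #|V| by rewrite /c; apply: eq_card.
have := geq_minr #|S| (#|V| - #|S|); lia.
Qed.


Section W.
Variables (V : finType) (e : rel V).
Hypothesis irr : irreflexive e.

Lemma walk_inv (p : seq (coloring V)) (f : coloring V) :
  path (recol_adj e) f p ->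
  exists L : V -> Z, (\sum_v Z.abs_nat (L v) <= size p) /\
   (forall v, exists q, L v = Z.of_nat (val (f v)) - Z.of_nat (val (last f p v)) + 3*q)%Z /\
   (forall u w, e u w -> 2*(L u - L w) = sg (last f p u) (last f p w) - sg (f u) (f w))%Z.
Proof.
elim: p f => [|x p IH] f; cbn [path last size].
  move=> _; exists (fun _ => 0%Z); split.
    by rewrite big1.
  split=> [v|u w _]; first by exists 0%Z; lia.
  lia.
case/andP=> /and3P[pf px /cards1P[v0 Hv0]] /IH[L [HL [HC HE]]].
have same : forall v, v != v0 -> f v = x v.
  move=> v nv; apply/eqP; apply/negPn/negP=> H.
  have : v \in [set v | f v != x v] by rewrite inE.
  by rewrite Hv0 inE (negbTE nv).
have nv0 : f v0 != x v0.
  have : v0 \in [set v | f v != x v] by rewrite Hv0 inE.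
  by rewrite inE.
set D := fun v => if v == v0 then mv (f v0) (x v0) else 0%Z.
exists (fun v => L v + D v)%Z; split.
  apply: (@leq_trans (\sum_v (Z.abs_nat (L v) + Z.abs_nat (D v)))).
    by apply: leq_sum => v _; lia.
  rewrite big_split /= [X in _ + X](bigD1 v0) //= [X in _ + (_ + X)]big1.
    rewrite /D eqxx /mv; case: ifP => _ /=; lia.
  by move=> v /negbTE nv; rewrite /D nv.
split.
  move=> v; have [q Hq] := HC v.
  rewrite /D; case: (eqVneq v v0) => [Ev|nv].
    subst v; have [q' Hq'] := local_cong nv0.
    exists (q + q')%Z; lia.
  exists q; rewrite (same v nv); lia.
move=> u w euw; have := HE u w euw.
rewrite /D.
case: (eqVneq u v0) => [Eu|nu]; case: (eqVneq w v0) => [Ew|nw].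
- by subst u w; rewrite irr in euw.
- subst u => H.
  have fw := same w nw.
  move/forallP: pf => /(_ v0) /forallP /(_ w) /implyP /(_ euw) n1.
  move/forallP: px => /(_ v0) /forallP /(_ w) /implyP /(_ euw) n2.
  have c1 : f w != f v0 by rewrite eq_sym.
  have c2 : f w != x v0 by rewrite fw eq_sym.
  have [h1 _] := @local_edge (f v0) (x v0) (f w) nv0 c1 c2.
  rewrite fw in h1 *; lia.
- subst w => H.
  have fu := same u nu.
  move/forallP: pf => /(_ u) /forallP /(_ v0) /implyP /(_ euw) n1.
  move/forallP: px => /(_ u) /forallP /(_ v0) /implyP /(_ euw) n2.
  have c2 : f u != x v0 by rewrite fu.
  have [_ h2] := @local_edge (f v0) (x v0) (f u) nv0 n1 c2.
  rewrite fu in h2 *; lia.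
- by rewrite (same u nu) (same w nw); lia.
Qed.
End W.


Lemma subset_card (T : finType) (A : {set T}) k : k <= #|A| ->
  exists S : {set T}, S \subset A /\ #|S| = k.
Proof.
move=> hk; exists [set x in take k (enum A)]; split.
  by apply/subsetP=> x; rewrite inE => /mem_take; rewrite mem_enum.
rewrite cardsE; move/card_uniqP: (take_uniq k (enum_uniq (mem A))) ->.
by rewrite size_take -cardE; case: ltngtP hk => //; lia.
Qed.

Lemma pow_bound n : n + n./2 <= expn 3 n.
Proof.
case: n => [|m] //; rewrite expnS; have := ltn_expl m (isT : 1 < 3); lia.
Qed.

Theorem mainTheorem11 (V : finType) (e : rel V) :
  is_tree e -> (3 * #|V|) %/ 2 <= recol_diam e.
Proof.
move=> [[sym irr] Hcon Hnc].
set n := #|V|.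
have Hdiv : (3 * n) %/ 2 <= n + n./2 by lia.
apply: (leq_trans Hdiv).
case: (posnP n) => [n0|npos]; first by rewrite n0.
have npos' := npos.
case/card_gt0P: npos => r _.
set P := [set v | connect (e2 e) (r, false) (v, false)].
have bipP : forall u w, e u w -> (u \in P) != (w \in P).
  by move=> u w euw; rewrite !inE; apply: bipart.
have [Q [HQ HQb]] : exists Q : {set V}, n./2 <= #|Q| /\
     forall u w, e u w -> (u \in Q) != (w \in Q).
  case: (leqP n./2 #|P|) => hP; first by exists P.
  exists (~: P); split.
    have := cardsC P; rewrite -/n; lia.
  by move=> u w euw; rewrite !in_setC; have := bipP u w euw; case: (u \in P); case: (w \in P).
have [S [SQ HS]] := subset_card HQ.
set f : coloring V := fcol Q.
set g : coloring V := gcol Q S.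
have pf : Defs.proper e f.
  apply/forallP=> u; apply/forallP=> w; apply/implyP=> euw.
  rewrite !ffunE; have := HQb u w euw.
  by case: (u \in Q); case: (w \in Q).
have pg : Defs.proper e g.
  apply/forallP=> u; apply/forallP=> w; apply/implyP=> euw.
  rewrite !ffunE; have := HQb u w euw.
  have iS : forall v, (v \in S) ==> (v \in Q) by move=> v; apply/implyP/subsetP.
  move: (iS u) (iS w).
  by case: (u \in S); case: (w \in S); case: (u \in Q); case: (w \in Q).
apply: (leq_trans _ (leq_bigmax_cond _ pf)).
apply: (leq_trans _ (leq_bigmax_cond _ pg)).
rewrite /recol_dist.
set a := (fun k => walk_of_len e k f g).
case Hh: (has a (iota 0 #|{: coloring V}|)); last first.
  rewrite hasNfind ?Hh // size_iota card_ffun card_ord -/n.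
  exact: pow_bound.
have hk : find a (iota 0 #|{: coloring V}|) < #|{: coloring V}|.
  by rewrite -{2}(size_iota 0 #|{: coloring V}|) -has_find.
have := nth_find 0 Hh; rewrite nth_iota // add0n.
move: (find a _) => k; rewrite /a => /existsP [p /andP [Hp /eqP Hl]].
have [L [HL [HC HE]]] := walk_inv irr Hp.
rewrite size_tuple Hl in HL HC HE.
have := final_count SQ Hcon npos' HL HC HE.
by rewrite HS -/n; have := geq_minl n./2 (n - n./2); lia.
Qed.
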